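(* Fix parameters $\ell_r>0$, $\ell_f>0$, $\bar r>0$, $\sigma\in(0,1)$, $\beta_{\max}>0$ and a sampling period $T>0$. Consider the kinematic bicycle model (KBM) with state $\chi=(r,\xi,v)\in\mathbb{R}^3$, $r>0$, and control $\omega=(a,\beta)\in\Omega_{\text{admis.}}:=\mathbb{R}\times[-\beta_{\max},\beta_{\max}]$, with dynamics $\dot\chi=f_{\text{KBM}}(\chi,\omega)$, where $$\dot r = v\cos(\xi-\beta),\qquad \dot\xi=-\tfrac{1}{r}v\sin(\xi-\beta)-\tfrac{v}{\ell_r}\sin(\beta),\qquad \dot v=a,$$ and let $h_{\bar r,\sigma}(\chi)=\frac{\sigma\cos(\xi/2)+1-\sigma}{\bar r}-\frac{1}{r}$. Let $\chi[n_0-1]$ be a state with $h_{\bar r,\sigma}(\chi[n_0-1])>0$ and let $\omega[n_0]\in\Omega_{\text{admis.}}$ be a fixed control. Let $\zeta:[0,\infty)\to\mathbb{R}^3$ be the solution of $\dot\zeta(t)=f_{\text{KBM}}(\zeta(t),\omega[n_0])$, $\zeta(0)=\chi[n_0-1]$ (i.e. the constant control $\omega[n_0]$ is applied, zero-order hold, starting from $\chi[n_0-1]$), so that the discretized KBM states are $\chi[n_0-1+n]=\zeta(nT)$ for $n\ge 0$. Let $\mathcal D\subseteq\{\chi: r>0\}$ be a set containing this trajectory on the relevant time interval, and let $L_{h_{\bar r,\sigma}}$ and $L_{f_{\text{KBM}}}$ be upper bounds on the Lipschitz constants (with respect to the Euclidean norm) on $\mathcal D$ of $h_{\bar r,\sigma}$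 and of $\chi\mapsto f_{\text{KBM}}(\chi,\omega[n_0])$, respectively. Let $\nu=\nu(\chi[n_0-1],\omega[n_0])>0$ solve $$\sqrt{2}\cdot L_{h_{\bar r,\sigma}}\cdot\lVert f_{\text{KBM}}(\chi[n_0-1],\omega[n_0])\rVert_2\cdot\nu\cdot e^{L_{f_{\text{KBM}}}\cdot\nu}=h_{\bar r,\sigma}(\chi[n_0-1]),$$ and define $$\Delta_{\max}(\chi[n_0-1],\omega[n_0]):=\max\big(\lfloor \nu/T\rfloor-1,\,0\big).$$ Then for every integer $n$ with $0\le n\le \Delta_{\max}(\chi[n_0-1],\omega[n_0])$ we have $h_{\bar r,\sigma}(\chi[n_0-1+n])>0$; i.e. holding the constant control $\omega[n_0]$ from state $\chi[n_0-1]$ preserves $h_{\bar r,\sigma}>0$ for at least $\Delta_{\max}$ samples.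
   Context: The KBM models an autonomous vehicle relative to a fixed point obstacle at the origin: $r$ is the distance to the origin, $\xi$ the orientation of the vehicle relative to the direction to the origin, $v$ the speed, $a$ the acceleration input and $\beta$ a (reparametrized) steering input. The set of safe states is $\{\chi: h_{\bar r,\sigma}(\chi)\ge 0\}$, which excludes a disk of radius $\bar r$ about the origin. Discrete-time signals are samples $x[n]=x(nT)$ of continuous-time signals, and inputs are applied with zero-order hold over each sampling period. $\lVert\cdot\rVert_2$ denotes the Euclidean norm on $\mathbb{R}^3$. *)

(* Defs.v *)
From Stdlib Require Import Reals ZArith.
From Coquelicot Require Import Coquelicot.
Open Scope R_scope.

Definition state := (R * R * R)%type.
Definition st_r (c : state) : R := fst (fst c).
Definition st_xi (c : state) : R := snd (fst c).
Definition st_v (c : state) : R := snd c.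

Definition norm3 (c : state) : R :=
  sqrt (st_r c ^ 2 + st_xi c ^ 2 + st_v c ^ 2).
Definition sub3 (c d : state) : state :=
  (st_r c - st_r d, st_xi c - st_xi d, st_v c - st_v d).

Definition f_KBM (l_r : R) (c : state) (om : R * R) : state :=
  let '(a, beta) := om in
  (st_v c * cos (st_xi c - beta),
   - (1 / st_r c) * st_v c * sin (st_xi c - beta) - st_v c / l_r * sin beta,
   a).

Definition h_bar (rbar sigma : R) (c : state) : R :=
  (sigma * cos (st_xi c / 2) + 1 - sigma) / rbar - 1 / st_r c.

Definition admissible (beta_max : R) (om : R * R) : Prop :=
  - beta_max <= snd om <= beta_max.

Definition Delta_max (nu T : R) : Z := Z.max (Int_part (nu / T) - 1) 0.

(* Main.v *)
Require Import Defs.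
From Stdlib Require Import Reals ZArith.
From Coquelicot Require Import Coquelicot.
From Stdlib Require Import Lra Psatz Lia.
Open Scope R_scope.


Definition SS (r x v : R -> R) (a b c eps s : R) :=
  sqrt ((r s - a)^2 + (x s - b)^2 + (v s - c)^2 + eps^2).

Lemma psi_deriv (r x v : R -> R) (a b c eps L F t dr dx dv : R) :
  is_derive r t dr -> is_derive x t dx -> is_derive v t dv -> 0 < eps ->
  is_derive (fun s => SS r x v a b c eps s * exp (-(L*s)) - F * s) t
   (((r t - a)*dr + (x t - b)*dx + (v t - c)*dv) / SS r x v a b c eps t * exp (-(L*t))
     - L * SS r x v a b c eps t * exp (-(L*t)) - F).
Proof.
  intros Hr Hx Hv He. unfold SS.
  assert (Hp : 0 < (r t - a)^2 + (x t - b)^2 + (v t - c)^2 + eps^2).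
  { assert (0 < eps^2) by (apply pow_lt; lra).
    assert (0 <= (r t - a)^2) by apply pow2_ge_0.
    assert (0 <= (x t - b)^2) by apply pow2_ge_0.
    assert (0 <= (v t - c)^2) by apply pow2_ge_0. lra. }
  auto_derive.
  - repeat split; try (eexists; eassumption). exact Hp.
  - replace (Derive (fun x => r x) t) with dr by (symmetry; apply is_derive_unique; exact Hr).
    replace (Derive (fun y => x y) t) with dx by (symmetry; apply is_derive_unique; exact Hx).
    replace (Derive (fun y => v y) t) with dv by (symmetry; apply is_derive_unique; exact Hv).
    replace ((r t + - a) * ((r t + - a) * 1) + (x t + - b) * ((x t + - b) * 1) +
     (v t + - c) * ((v t + - c) * 1) + eps * (eps * 1)) with
     ((r t - a)^2 + (x t - b)^2 + (v t - c)^2 + eps^2) by ring.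
    assert (0 < sqrt ((r t - a)^2 + (x t - b)^2 + (v t - c)^2 + eps^2)) by (apply sqrt_lt_R0; exact Hp).
    set (S := sqrt ((r t - a)^2 + (x t - b)^2 + (v t - c)^2 + eps^2)) in *.
    field. lra.
Qed.

Lemma exp_le' (x y : R) : x <= y -> exp x <= exp y.
Proof. intros H. destruct (Rle_lt_or_eq_dec x y H) as [H1|H1].
  left; apply exp_increasing; exact H1. subst; lra. Qed.

Lemma exp_le1 (x : R) : x <= 0 -> exp x <= 1.
Proof. intros H. rewrite <- exp_0. apply exp_le'; exact H. Qed.

Lemma CS3 a1 a2 a3 b1 b2 b3 :
  a1*b1 + a2*b2 + a3*b3 <= sqrt (a1^2+a2^2+a3^2) * sqrt (b1^2+b2^2+b3^2).
Proof.
  assert (Ha : 0 <= a1^2+a2^2+a3^2) by nra.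
  assert (Hb : 0 <= b1^2+b2^2+b3^2) by nra.
  rewrite <- sqrt_mult by assumption.
  destruct (Rle_dec (a1*b1 + a2*b2 + a3*b3) 0) as [H|H].
  - apply Rle_trans with 0; [exact H| apply sqrt_pos].
  - rewrite <- (sqrt_pow2 (a1*b1 + a2*b2 + a3*b3)) at 1 by lra.
    apply sqrt_le_1_alt.
    assert (E : (a1^2+a2^2+a3^2)*(b1^2+b2^2+b3^2) - (a1*b1 + a2*b2 + a3*b3)^2
       = (a1*b2-a2*b1)^2 + (a1*b3-a3*b1)^2 + (a2*b3-a3*b2)^2) by ring.
    assert (0 <= (a1*b2-a2*b1)^2) by apply pow2_ge_0.
    assert (0 <= (a1*b3-a3*b1)^2) by apply pow2_ge_0.
    assert (0 <= (a2*b3-a3*b2)^2) by apply pow2_ge_0.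
    lra.
Qed.

Lemma bound_df d1 d2 d3 f1 f2 f3 g1 g2 g3 eps L c :
 0 < eps -> 0 <= L -> 0 <= c ->
 sqrt ((f1-g1)^2+(f2-g2)^2+(f3-g3)^2) <= L * sqrt (d1^2+d2^2+d3^2) ->
 (d1*f1+d2*f2+d3*f3) / sqrt (d1^2+d2^2+d3^2+eps^2) * exp (-(L*c))
   - L * sqrt (d1^2+d2^2+d3^2+eps^2) * exp (-(L*c)) - sqrt (g1^2+g2^2+g3^2) <= 0.
Proof.
  intros He HL Hc HM.
  set (N := sqrt (d1^2+d2^2+d3^2)) in *.
  set (S := sqrt (d1^2+d2^2+d3^2+eps^2)).
  set (G := sqrt (g1^2+g2^2+g3^2)).
  set (M := sqrt ((f1-g1)^2+(f2-g2)^2+(f3-g3)^2)) in *.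
  assert (C1 : d1*g1+d2*g2+d3*g3 <= N * G) by apply CS3.
  assert (C2 : d1*(f1-g1)+d2*(f2-g2)+d3*(f3-g3) <= N * M) by apply CS3.
  assert (HN : 0 <= N) by apply sqrt_pos.
  assert (HG : 0 <= G) by apply sqrt_pos.
  assert (HNS : N <= S) by (apply sqrt_le_1_alt; assert (0 < eps^2) by (apply pow_lt; lra); lra).
  assert (HS : 0 < S).
  { apply sqrt_lt_R0. assert (0 < eps^2) by (apply pow_lt; lra). nra. }
  assert (Hdf : d1*f1+d2*f2+d3*f3 <= S * (G + L * S)).
  { assert (N*M <= N*(L*N)) by (apply Rmult_le_compat_l; assumption).
    assert (N*G <= S*G) by (apply Rmult_le_compat_r; assumption).
    assert (L*(N*N) <= L*(S*S)) by (apply Rmult_le_compat_l; [assumption| apply Rmult_le_compat; assumption]).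
    nra. }
  assert (Hq : (d1*f1+d2*f2+d3*f3) / S <= G + L * S).
  { unfold Rdiv. apply Rmult_le_reg_l with S; [exact HS|].
    rewrite <- Rmult_assoc, (Rmult_comm S), Rmult_assoc, Rinv_r by lra. lra. }
  assert (He1 : exp (-(L*c)) <= 1) by (apply exp_le1; nra).
  assert (He0 : 0 < exp (-(L*c))) by apply exp_pos.
  assert ((d1*f1+d2*f2+d3*f3) / S * exp (-(L*c)) <= (G + L*S) * exp (-(L*c)))
    by (apply Rmult_le_compat_r; lra).
  nra.
Qed.

Theorem lemma2
  (l_r l_f rbar sigma beta_max T : R)
  (Hlr : 0 < l_r) (Hlf : 0 < l_f) (Hrbar : 0 < rbar)
  (Hsigma : 0 < sigma < 1) (Hbmax : 0 < beta_max) (HT : 0 < T)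
  (chi0 : state) (om : R * R)
  (Hr0 : 0 < st_r chi0)
  (Hh0 : 0 < h_bar rbar sigma chi0)
  (Hom : admissible beta_max om)
  (zeta : R -> state)
  (Hz0 : zeta 0 = chi0)
  (Hcont0 : filterlim (fun t => st_r (zeta t)) (at_right 0) (locally (st_r chi0)) /\
            filterlim (fun t => st_xi (zeta t)) (at_right 0) (locally (st_xi chi0)) /\
            filterlim (fun t => st_v (zeta t)) (at_right 0) (locally (st_v chi0)))
  (Hode : forall t, 0 < t ->
     is_derive (fun s => st_r (zeta s)) t (st_r (f_KBM l_r (zeta t) om)) /\
     is_derive (fun s => st_xi (zeta s)) t (st_xi (f_KBM l_r (zeta t) om)) /\
     is_derive (fun s => st_v (zeta s)) t (st_v (f_KBM l_r (zeta t) om)))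
  (D : state -> Prop)
  (HD : forall c, D c -> 0 < st_r c)
  (nu : R) (Hnu : 0 < nu)
  (HzD : forall t, 0 <= t <= nu -> D (zeta t))
  (L_h L_f : R)
  (HLh : forall x y, D x -> D y ->
     Rabs (h_bar rbar sigma x - h_bar rbar sigma y) <= L_h * norm3 (sub3 x y))
  (HLf : forall x y, D x -> D y ->
     norm3 (sub3 (f_KBM l_r x om) (f_KBM l_r y om)) <= L_f * norm3 (sub3 x y))
  (Hnu_eq : sqrt 2 * L_h * norm3 (f_KBM l_r chi0 om) * nu * exp (L_f * nu)
            = h_bar rbar sigma chi0) :
  forall n : nat, (Z.of_nat n <= Delta_max nu T)%Z ->
    0 < h_bar rbar sigma (zeta (INR n * T)).

Proof.
  intros n Hn.
  assert (KEY : forall t, 0 < t <= nu -> 0 < h_bar rbar sigma (zeta t)).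
  { intros t [Ht0 Htnu].
    assert (Dt : D (zeta t)) by (apply HzD; lra).
    assert (D0 : D chi0) by (rewrite <- Hz0; apply HzD; lra).
    set (Et := norm3 (sub3 (zeta t) chi0)).
    assert (HE0 : 0 <= Et) by apply sqrt_pos.
    assert (Hhb : h_bar rbar sigma chi0 - L_h * Et <= h_bar rbar sigma (zeta t)).
    { specialize (HLh _ _ Dt D0). fold Et in HLh.
      pose proof (Rle_abs (-(h_bar rbar sigma (zeta t) - h_bar rbar sigma chi0))) as HA.
      rewrite Rabs_Ropp in HA. lra. }
    destruct (Rle_dec L_h 0) as [HLh0|HLh0].
    { nra. }
    apply Rnot_le_lt in HLh0.
    set (F0 := norm3 (f_KBM l_r chi0 om)) in *.
    assert (HF0 : 0 < F0).
    { assert (0 <= F0) by apply sqrt_pos.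
      destruct (Rle_dec F0 0) as [HH|HH]; [|lra].
      assert (F0 = 0) as HZ by lra. rewrite HZ in Hnu_eq. lra. }
    destruct (Rle_dec 0 L_f) as [HLf0|HLf0].
    2:{ apply Rnot_le_lt in HLf0.
        assert (0 <= norm3 (sub3 (f_KBM l_r (zeta t) om) (f_KBM l_r chi0 om))) by apply sqrt_pos.
        specialize (HLf _ _ Dt D0). fold Et in HLf.
        assert (Et = 0) by nra. nra. }
    set (rr := fun s => st_r (zeta s)).
    set (xx := fun s => st_xi (zeta s)).
    set (vv := fun s => st_v (zeta s)).
    set (a := st_r chi0). set (b := st_xi chi0). set (c := st_v chi0).
    set (eps := F0 * nu / 16).
    assert (Heps : 0 < eps) by (unfold eps; nra).
    set (psi := fun s => SS rr xx vv a b c eps s * exp (-(L_f*s)) - F0 * s).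
    set (df := fun s => ((rr s - a)*st_r (f_KBM l_r (zeta s) om) + (xx s - b)*st_xi (f_KBM l_r (zeta s) om)
          + (vv s - c)*st_v (f_KBM l_r (zeta s) om)) / SS rr xx vv a b c eps s * exp (-(L_f*s))
          - L_f * SS rr xx vv a b c eps s * exp (-(L_f*s)) - F0).
    assert (Hder : forall s, 0 < s -> is_derive psi s (df s)).
    { intros s Hs. destruct (Hode s Hs) as [A1 [A2 A3]].
      unfold psi, df. apply psi_deriv; assumption. }
    assert (Hdf : forall s, 0 <= s <= nu -> df s <= 0).
    { intros s Hs. unfold df, SS.
      assert (Ds : D (zeta s)) by (apply HzD; lra).
      specialize (HLf _ _ Ds D0). unfold norm3, sub3, st_r, st_xi, st_v in HLf; simpl in HLf.
      unfold F0, norm3.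
      unfold rr, xx, vv, a, b, c, st_r, st_xi, st_v.
      apply bound_df; try lra. exact HLf. }
    assert (Hmono : forall s, 0 < s < t -> psi t <= psi s).
    { intros s Hs.
      destruct (MVT_gen psi s t df) as [u [Hu Heq]].
      - intros x Hx. rewrite Rmin_left in Hx by lra. rewrite Rmax_right in Hx by lra.
        apply Hder. lra.
      - intros x Hx. rewrite Rmin_left in Hx by lra. rewrite Rmax_right in Hx by lra.
        apply continuity_pt_filterlim. apply (ex_derive_continuous psi x).
        exists (df x). apply Hder. lra.
      - rewrite Rmin_left in Hu by lra. rewrite Rmax_right in Hu by lra.
        assert (df u <= 0) by (apply Hdf; lra). nra. }
    destruct Hcont0 as [C1 [C2 C3]].
    assert (Heps2 : 0 < eps/2) by lra.
    pose proof (proj1 (filterlim_locally _ _) C1 (mkposreal _ Heps2)) as B1.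
    pose proof (proj1 (filterlim_locally _ _) C2 (mkposreal _ Heps2)) as B2.
    pose proof (proj1 (filterlim_locally _ _) C3 (mkposreal _ Heps2)) as B3.
    destruct B1 as [d1 B1]. destruct B2 as [d2 B2]. destruct B3 as [d3 B3].
    set (s := Rmin (Rmin d1 d2) (Rmin d3 t) / 2).
    assert (Hs0 : 0 < s).
    { unfold s. pose proof (cond_pos d1). pose proof (cond_pos d2). pose proof (cond_pos d3).
      assert (0 < Rmin (Rmin d1 d2) (Rmin d3 t)) by (repeat apply Rmin_pos; lra). lra. }
    assert (Hmin1 : Rmin (Rmin d1 d2) (Rmin d3 t) <= Rmin d1 d2) by apply Rmin_l.
    assert (Hmin2 : Rmin (Rmin d1 d2) (Rmin d3 t) <= Rmin d3 t) by apply Rmin_r.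
    assert (Rmin d1 d2 <= d1) by apply Rmin_l. assert (Rmin d1 d2 <= d2) by apply Rmin_r.
    assert (Rmin d3 t <= d3) by apply Rmin_l. assert (Rmin d3 t <= t) by apply Rmin_r.
    assert (Hs1 : s < d1) by (unfold s in *; lra).
    assert (Hs2 : s < d2) by (unfold s in *; lra).
    assert (Hs3 : s < d3) by (unfold s in *; lra).
    assert (Hst : s < t) by (unfold s in *; lra).
    assert (Hbs : forall d : posreal, s < d -> ball 0 d s).
    { intros d Hd. unfold ball; simpl. unfold AbsRing_ball, abs, minus, plus, opp; simpl.
      rewrite Ropp_0, Rplus_0_r, Rabs_pos_eq; lra. }
    specialize (B1 s (Hbs _ Hs1) Hs0). specialize (B2 s (Hbs _ Hs2) Hs0). specialize (B3 s (Hbs _ Hs3) Hs0).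
    unfold ball in B1, B2, B3; simpl in B1, B2, B3.
    unfold AbsRing_ball, abs, minus, plus, opp in B1, B2, B3; simpl in B1, B2, B3.
    assert (Q1 : (rr s - a)^2 <= (eps/2)^2).
    { rewrite <- (pow2_abs (rr s - a)). apply pow_incr. split; [apply Rabs_pos|]. unfold rr, a, Rminus; lra. }
    assert (Q2 : (xx s - b)^2 <= (eps/2)^2).
    { rewrite <- (pow2_abs (xx s - b)). apply pow_incr. split; [apply Rabs_pos|]. unfold xx, b, Rminus; lra. }
    assert (Q3 : (vv s - c)^2 <= (eps/2)^2).
    { rewrite <- (pow2_abs (vv s - c)). apply pow_incr. split; [apply Rabs_pos|]. unfold vv, c, Rminus; lra. }
    assert (HSs : SS rr xx vv a b c eps s <= 2 * eps).
    { unfold SS. rewrite <- (sqrt_pow2 (2*eps)) by lra. apply sqrt_le_1_alt. nra. }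
    assert (Hpsis : psi s <= 2 * eps).
    { unfold psi. assert (exp (-(L_f*s)) <= 1) by (apply exp_le1; nra).
      assert (0 <= SS rr xx vv a b c eps s) by apply sqrt_pos.
      assert (0 < exp (-(L_f*s))) by apply exp_pos. nra. }
    assert (Hpt : psi t <= 2 * eps) by (specialize (Hmono s (conj Hs0 Hst)); lra).
    assert (HEt : Et <= SS rr xx vv a b c eps t).
    { unfold Et, norm3, sub3, SS, st_r, st_xi, st_v; simpl. apply sqrt_le_1_alt.
      unfold rr, xx, vv, a, b, c, st_r, st_xi, st_v. assert (0 < eps^2) by (apply pow_lt; lra). lra. }
    assert (HSt : SS rr xx vv a b c eps t <= (2*eps + F0 * t) * exp (L_f * t)).
    { unfold psi in Hpt.
      assert (Hx : exp (-(L_f*t)) * exp (L_f*t) = 1).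
      { rewrite <- exp_plus. replace (-(L_f*t) + L_f*t) with 0 by ring. apply exp_0. }
      assert (0 < exp (L_f*t)) by apply exp_pos.
      assert (HH3 : SS rr xx vv a b c eps t * exp (-(L_f*t)) * exp (L_f*t) <= (2*eps + F0*t) * exp (L_f*t))
        by (apply Rmult_le_compat_r; lra).
      rewrite Rmult_assoc, Hx, Rmult_1_r in HH3. exact HH3. }
    assert (Hexp : exp (L_f * t) <= exp (L_f * nu)) by (apply exp_le'; nra).
    set (P := F0 * nu * exp (L_f * nu)).
    assert (HP : 0 < P) by (unfold P; apply Rmult_lt_0_compat; [apply Rmult_lt_0_compat; lra | apply exp_pos]).
    assert (HEP : Et <= 9/8 * P).
    { assert ((2*eps + F0 * t) * exp (L_f * t) <= (2*eps + F0*nu) * exp (L_f*nu)).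
      { apply Rmult_le_compat; try nra. left; apply exp_pos. }
      unfold P, eps in *. nra. }
    assert (Hsq : 9/8 < sqrt 2).
    { rewrite <- (sqrt_pow2 (9/8)) by lra. apply sqrt_lt_1_alt. lra. }
    assert (h_bar rbar sigma chi0 = L_h * (sqrt 2 * P)) by (rewrite <- Hnu_eq; unfold P; ring).
    assert (L_h * Et <= L_h * (9/8*P)) by (apply Rmult_le_compat_l; lra).
    assert (L_h * (9/8*P) < L_h * (sqrt 2 * P)) by (apply Rmult_lt_compat_l; nra).
    lra.
  }
  destruct n as [|n'].
  - simpl. rewrite Rmult_0_l, Hz0. exact Hh0.
  - apply KEY.
    assert (Hn1 : (Z.of_nat (S n') + 1 <= Int_part (nu / T))%Z) by (unfold Delta_max in Hn; lia).
    apply IZR_le in Hn1. rewrite plus_IZR, <- INR_IZR_INZ in Hn1.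
    destruct (base_Int_part (nu / T)) as [HI _].
    assert (HnT : (INR (S n') + 1) * T <= nu).
    { assert (INR (S n') + 1 <= nu / T) by lra.
      apply Rmult_le_compat_r with (r := T) in H; [|lra].
      unfold Rdiv in H. rewrite Rmult_assoc, Rinv_l, Rmult_1_r in H by lra. exact H. }
    assert (0 < INR (S n')) by (apply lt_0_INR; lia).
    split; nra.
Qed.
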